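(* Let $C_1 = [0,1] \setminus \left(\frac{1}{3}, \frac{2}{3}\right)$ and for $i \geq 2$ let $C_i = \frac{1}{3} C_{i-1} \cup \left(\frac{2}{3} + \frac{1}{3} C_{i-1}\right)$. Then $M_{C_i} = (0,1)$ for all integers $i \geq 1$.
   Context: For a set $A \subset \mathbb{R}$, the midpoint set of $A$ is $M_A := \left\{\frac{x+y}{2} : x, y \in A,\ x \neq y\right\}$. For $c \in \mathbb{R}$ and $A \subset \mathbb{R}$, $cA = \{ca : a \in A\}$ and $c + A = \{c + a : a \in A\}$. *)

(* Defs.v *)
From Stdlib Require Import Reals.
Open Scope R_scope.

Definition midpoint_set (A : R -> Prop) : R -> Prop :=
  fun m => exists x y, A x /\ A y /\ x <> y /\ m = (x + y) / 2.

Definition scale_set (c : R) (A : R -> Prop) : R -> Prop :=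
  fun z => exists a, A a /\ z = c * a.

Definition shift_set (c : R) (A : R -> Prop) : R -> Prop :=
  fun z => exists a, A a /\ z = c + a.

(* Cantor approximations: C 1 = [0,1] \ (1/3,2/3),
   C i = (1/3) C (i-1) ∪ (2/3 + (1/3) C (i-1)) for i >= 2.
   C 0 is an unused placeholder (the empty set). *)
Fixpoint cantor_C (i : nat) : R -> Prop :=
  match i with
  | O => fun _ => False
  | S O => fun x => 0 <= x <= 1 /\ ~ (1/3 < x < 2/3)
  | S ((S _) as j) => fun x =>
      scale_set (1/3) (cantor_C j) x \/
      shift_set (2/3) (scale_set (1/3) (cantor_C j)) x
  end.

(* Main.v *)
Require Import Defs.
From Stdlib Require Import Reals Lra Lia.
Open Scope R_scope.

Definition Good (A : R -> Prop) : Prop :=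
  (forall x, A x -> 0 <= x <= 1) /\ A 0 /\ A 1 /\
  (forall m, 0 < m < 1 -> midpoint_set A m).

Definition Step (A : R -> Prop) : R -> Prop := fun x =>
  scale_set (1/3) A x \/ shift_set (2/3) (scale_set (1/3) A) x.

Lemma Good_ext (A B : R -> Prop) : (forall x, A x <-> B x) -> Good A -> Good B.
Proof.
  intros E [H1 [H2 [H3 H4]]]. split; [|split; [|split]].
  - intros x Hx. apply H1, E, Hx.
  - apply E, H2.
  - apply E, H3.
  - intros m Hm. destruct (H4 m Hm) as [x [y [Hx [Hy [Hxy Hm']]]]].
    exists x, y. repeat split; auto; apply E; auto.
Qed.

Lemma Good_step A : Good A -> Good (Step A).
Proof.
  intros [H1 [H2 [H3 H4]]]. unfold Step, scale_set, shift_set.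
  split; [|split; [|split]].
  - intros x [[a [Ha ->]] | [b [[a [Ha ->]] ->]]]; specialize (H1 a Ha); lra.
  - left. exists 0. split; auto; lra.
  - right. exists (1/3). split; [exists 1; split; auto; lra | lra].
  - intros m Hm.
    destruct (Rlt_le_dec m (1/3)) as [Hl|Hl].
    + destruct (H4 (3*m)) as [x [y [Hx [Hy [Hxy Hm']]]]]; [lra|].
      exists (1/3*x), (1/3*y). split; [left; exists x; auto|].
      split; [left; exists y; auto|]. split; [intro; apply Hxy; lra | lra].
    + destruct (Rlt_le_dec (2/3) m) as [Hr|Hr].
      * destruct (H4 (3*m-2)) as [x [y [Hx [Hy [Hxy Hm']]]]]; [lra|].
        exists (2/3 + 1/3*x), (2/3 + 1/3*y).
        split; [right; exists (1/3*x); split; [exists x; auto|auto]|].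
        split; [right; exists (1/3*y); split; [exists y; auto|auto]|].
        split; [intro; apply Hxy; lra | lra].
      * assert (Hs : exists a b, A a /\ A b /\ a + b = 6*m - 2).
        { destruct (Req_dec m (1/3)) as [E|E].
          - exists 0, 0. repeat split; auto; lra.
          - destruct (Req_dec m (2/3)) as [E'|E'].
            + exists 1, 1. repeat split; auto; lra.
            + destruct (H4 (3*m - 1)) as [x [y [Hx [Hy [Hxy Hm']]]]]; [lra|].
              exists x, y. repeat split; auto; lra. }
        destruct Hs as [a [b [Ha [Hb Hab]]]].
        pose proof (H1 a Ha). pose proof (H1 b Hb).
        exists (1/3*a), (2/3 + 1/3*b).
        split; [left; exists a; auto|].
        split; [right; exists (1/3*b); split; [exists b; auto|auto]|].
        split; lra.
Qed.

Lemma Good_C : forall i, (1 <= i)%nat -> Good (cantor_C i).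
Proof.
  intros i Hi. induction i as [|i IH]; [lia|].
  destruct i as [|j].
  - apply (Good_ext (Step (fun x => 0 <= x <= 1))).
    + intros x. unfold Step, scale_set, shift_set. simpl. split.
      * intros [[a [Ha ->]] | [b [[a [Ha ->]] ->]]]; lra.
      * intros [H1 H2].
        destruct (Rle_dec x (1/3)).
        -- left. exists (3*x). split; lra.
        -- right. exists (x - 2/3). split; [exists (3*(x-2/3)); split; lra | lra].
    + apply Good_step. split; [|split; [|split]]; try (intros; lra).
      intros m Hm. destruct (Rle_dec m (1/2)).
      * exists 0, (2*m). repeat split; lra.
      * exists (2*m-1), 1. repeat split; lra.
  - change (Good (Step (cantor_C (S j)))). apply Good_step, IH. lia.
Qed.

Theorem theorem2p6 : forall i : nat, (1 <= i)%nat ->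
  forall m : R, midpoint_set (cantor_C i) m <-> 0 < m < 1.
Proof.
  intros i Hi m. destruct (Good_C i Hi) as [H1 [_ [_ H4]]]. split.
  - intros [x [y [Hx [Hy [Hxy ->]]]]].
    pose proof (H1 x Hx). pose proof (H1 y Hy).
    destruct (Rlt_le_dec x y); [lra|]. assert (y < x) by (destruct r; [auto| congruence]). lra.
  - apply H4.
Qed.
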